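(* Let $p,q,p',q'\in(0,1/2)$ and suppose $K_{pq}$ and $K_{p'q'}$ are twofold Cantor sets, with generating systems $\{S_1,S_2,S_3,S_4\}$ and $\{S_1',S_2',S_3',S_4'\}$ respectively. Then: (i) there is a homeomorphism $f:K_{pq}\to K_{p'q'}$ realising an isomorphism of the self-similar structures, i.e. $f(S_i(x))=S_i'(f(x))$ for all $x\in K_{pq}$ and all $i\in\{1,2,3,4\}$; (ii) if $(p,q)\neq(p',q')$, then such a homeomorphism $f$ cannot be extended to a homeomorphism of $[0,1]$ onto itself.
   Context: For $p,q\in(0,1/2)$ let $S_1(x)=px$, $S_2(x)=qx$, $S_3(x)=px+1-p$, $S_4(x)=qx+1-q$, let $K_{pq}$ be the attractor of $\{S_1,S_2,S_3,S_4\}$ (the unique nonempty compact $K\subset\mathbb R$ with $K=\bigcup_{i=1}^4S_i(K)$), and let $A=S_3(K_{pq})\cup S_4(K_{pq})$. $K_{pq}$ is called a twofold Cantor set if $S_1^m(A)\cap S_2^n(A)=\varnothing$ for all $m,n\in\mathbb N$. The maps $S_i'$ are defined in the same way with $p',q'$ in place of $p,q$. *)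

(* Defs.v *)
From mathcomp Require Import all_boot all_order all_algebra.
From mathcomp Require Import all_classical all_reals all_analysis.
Set Implicit Arguments. Unset Strict Implicit. Unset Printing Implicit Defensive.
Import Order.TTheory GRing.Theory Num.Theory.
Import numFieldNormedType.Exports.
Local Open Scope classical_set_scope.
Local Open Scope ring_scope.

Section Defs.
Variable R : realType.

(* The four similitudes S_1..S_4, indexed by i : 'I_4 (i = 0,1,2,3 <-> S_1..S_4). *)
Definition Smap (p q : R) (i : 'I_4) (x : R) : R :=
  match nat_of_ord i with
  | 0 => p * x
  | 1 => q * x
  | 2 => p * x + 1 - p
  | _ => q * x + 1 - q
  end.

Definition is_attractor (p q : R) (K : set R) : Prop :=
  K !=set0 /\ compact K /\ K = \bigcup_(i : 'I_4) (Smap p q i @` K).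

Definition Aset (p q : R) (K : set R) : set R :=
  (Smap p q (inord 2) @` K) `|` (Smap p q (inord 3) @` K).

Definition twofold (p q : R) (K : set R) : Prop :=
  forall m n : nat, (0 < m)%N -> (0 < n)%N ->
    (iter m (Smap p q (inord 0)) @` Aset p q K) `&`
    (iter n (Smap p q (inord 1)) @` Aset p q K) = set0.

Definition homeo_on (A B : set R) (f : R -> R) : Prop :=
  exists g : R -> R,
    (forall x, A x -> B (f x)) /\
    (forall y, B y -> A (g y)) /\
    (forall x, A x -> g (f x) = x) /\
    (forall y, B y -> f (g y) = y) /\
    {within A, continuous f} /\
    {within B, continuous g}.
End Defs.

(* Main.v *)
Require Import Defs.
From mathcomp Require Import all_boot all_order all_algebra.
From mathcomp Require Import all_classical all_reals all_analysis.
From mathcomp Require Import ring lra zify.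
Import Order.TTheory GRing.Theory Num.Theory.
Import numFieldNormedType.Exports.
Local Open Scope classical_set_scope.
Local Open Scope ring_scope.
Set Implicit Arguments. Unset Strict Implicit. Unset Printing Implicit Defensive.

Section Small.
Variable R : realType.
Lemma half_pow_le (k : nat) : (k.+1)%:R * (2^-1 : R) ^+ k <= 1.
Proof.
elim: k => [|k IH]; first by rewrite expr0 mulr1.
rewrite exprS.
have ha : 0 <= (2^-1 : R) ^+ k by rewrite exprn_ge0 // invr_ge0.
move: IH ha; set a := (2^-1 : R) ^+ k => IH ha.
have hk : (0 : R) <= k%:R by rewrite ler0n.
have e1 : (k.+2%:R : R) = k%:R + 2 by rewrite -[k.+2]addn2 natrD.
have e2 : (k.+1%:R : R) = k%:R + 1 by rewrite -[k.+1]addn1 natrD.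
rewrite e1; rewrite e2 in IH.
have h2 : (2^-1 : R) * 2 = 1 by rewrite mulVf.
nra.
Qed.

Lemma exp_small (C e : R) : 0 < e -> exists k : nat, C * (2^-1) ^+ k < e.
Proof.
move=> e0; have [C0|C0] := lerP C 0.
  by exists 0%N; rewrite expr0 mulr1; apply: le_lt_trans C0 e0.
exists (Num.truncn (C / e)).
set k := Num.truncn (C / e).
have h1 := truncnS_gt (C / e); rewrite -/k in h1.
have h2 := half_pow_le k.
have hk : 0 < (k.+1%:R : R) by rewrite ltr0n.
have ha : 0 <= (2^-1 : R) ^+ k by rewrite exprn_ge0 // invr_ge0.
have : C < e * k.+1%:R.
  have ee : C = C / e * e by rewrite divfK // gt_eqF.
  by rewrite {1}ee mulrC ltr_pM2l.
move=> h3.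
have : C * (2^-1) ^+ k * k.+1%:R < e * k.+1%:R.
  apply: le_lt_trans h3; rewrite -mulrA [_ ^+ k * _]mulrC; apply: ler_piMr => //; exact: ltW.
by rewrite ltr_pM2r.
Qed.

Lemma small_zero (d C : R) : 0 <= d -> (forall k, d <= C * (2^-1) ^+ k) -> d = 0.
Proof.
move=> d0 H; apply/eqP; rewrite eq_le d0 andbT; rewrite leNgt; apply/negP => dp.
have [k hk] := exp_small C dp.
by move: (H k); rewrite leNgt hk.
Qed.
End Small.

Section Codes.
Variable R : realType.
Implicit Types (p q x y z : R) (w : nat -> 'I_4).

Definition rr p q (i : 'I_4) : R := if odd i then q else p.

Lemma Smap_lin p q i x : Smap p q i x = rr p q i * x + Smap p q i 0.
Proof.
case: i => [[|[|[|[|n]]]] Hi] //=; rewrite /Smap /rr /=; ring.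
Qed.

Lemma Smap_sub p q i x y : Smap p q i x - Smap p q i y = rr p q i * (x - y).
Proof. rewrite (Smap_lin _ _ _ x) (Smap_lin _ _ _ y); ring. Qed.

Definition shift w : nat -> 'I_4 := fun n => w n.+1.
Definition sh (k : nat) w : nat -> 'I_4 := fun n => w (k + n)%N.

Fixpoint Qk p q (k : nat) w (y : R) : R :=
  if k is k'.+1 then Smap p q (w 0%N) (Qk p q k' (shift w) y) else y.

Fixpoint rp p q (k : nat) w : R :=
  if k is k'.+1 then rr p q (w 0%N) * rp p q k' (shift w) else 1.

Lemma Q_sub p q k w y z : Qk p q k w y - Qk p q k w z = rp p q k w * (y - z).
Proof.
elim: k w => [|k IH] w /=; first by rewrite mul1r.
by rewrite Smap_sub IH mulrA.
Qed.

Lemma Q_add p q k j w y : Qk p q (k + j) w y = Qk p q k w (Qk p q j (sh k w) y).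
Proof.
elim: k w => [|k IH] w /=; first by [].
by rewrite IH.
Qed.

Lemma Q_ext p q k w w' y : (forall n, w n = w' n) -> Qk p q k w y = Qk p q k w' y.
Proof.
elim: k w w' => [|k IH] w w' H //=.
by rewrite H (IH _ (shift w')) // => n; rewrite /shift H.
Qed.

Lemma rp_ext p q k w w' : (forall n, w n = w' n) -> rp p q k w = rp p q k w'.
Proof.
elim: k w w' => [|k IH] w w' H //=.
by rewrite H (IH _ (shift w')) // => n; rewrite /shift H.
Qed.

Variables p q : R.
Hypothesis hp : 0 < p < 2^-1.
Hypothesis hq : 0 < q < 2^-1.

Lemma rr_gt0 i : 0 < rr p q i.
Proof. by rewrite /rr; case: ifP => _; [case/andP: hq|case/andP: hp]. Qed.

Lemma rr_lt i : rr p q i < 2^-1.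
Proof. by rewrite /rr; case: ifP => _; [case/andP: hq|case/andP: hp]. Qed.

Lemma Smap_01 i x : 0 <= x <= 1 -> 0 <= Smap p q i x <= 1.
Proof.
case/andP: hp => hp0 hp1; case/andP: hq => hq0 hq1.
case: i => [[|[|[|[|n]]]] Hi] //=; rewrite /Smap /= => /andP[x0 x1];
  apply/andP; split; nra.
Qed.

Lemma rp_gt0 k w : 0 < rp p q k w.
Proof. elim: k w => [|k IH] w //=; by rewrite mulr_gt0 // rr_gt0. Qed.

Lemma rp_le k w : rp p q k w <= (2^-1) ^+ k.
Proof.
elim: k w => [|k IH] w //=; rewrite exprS.
apply: ler_pM; [exact: ltW (rr_gt0 _)|exact: ltW (rp_gt0 _ _)|exact: ltW (rr_lt _)|exact: IH].
Qed.

Lemma Q_01 k w y : 0 <= y <= 1 -> 0 <= Qk p q k w y <= 1.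
Proof. elim: k w => [|k IH] w //= Hy; by apply: Smap_01; apply: IH. Qed.

Lemma Q_le k w y z : y <= z -> Qk p q k w y <= Qk p q k w z.
Proof.
move=> yz; rewrite -subr_ge0 Q_sub mulr_ge0 //; first exact: ltW (rp_gt0 _ _).
by rewrite subr_ge0.
Qed.

Lemma Q01_0 k w : 0 <= Qk p q k w 0 <= 1.
Proof. by apply: Q_01; rewrite lexx ler01. Qed.

Lemma Q01_1 k w : 0 <= Qk p q k w 1 <= 1.
Proof. by apply: Q_01; rewrite lexx ler01. Qed.

Definition pi w : R := sup (range (fun k => Qk p q k w 0)).

Lemma pi_bounds k w : Qk p q k w 0 <= pi w <= Qk p q k w 1.
Proof.
have ub : ubound (range (fun k => Qk p q k w 0)) (Qk p q k w 1).
  move=> _ [j _ <-].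
  have [jk|kj] := leqP j k.
    apply: le_trans (Q_le k w ler01).
    rewrite -(subnKC jk) Q_add; apply: Q_le.
    by case/andP: (Q01_0 (k - j) (sh j w)).
  rewrite -(subnKC (ltnW kj)) Q_add; apply: Q_le.
  by case/andP: (Q01_0 (j - k) (sh k w)).
apply/andP; split.
  apply: sup_upper_bound; last by exists k.
  by split; [exists (Qk p q 0 w 0), 0%N | exists (Qk p q k w 1)].
by apply: ge_sup => //; exists (Qk p q 0 w 0), 0%N.
Qed.
Lemma pi_near k w y : 0 <= y <= 1 -> `|pi w - Qk p q k w y| <= (2^-1) ^+ k.
Proof.
move=> /andP[y0 y1].
have /andP[b1 b2] := pi_bounds k w.
have l1 := Q_le k w y0; have l2 := Q_le k w y1.
have e := Q_sub p q k w 1 0; rewrite subr0 mulr1 in e.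
have r := rp_le k w.
rewrite ler_norml; apply/andP; split; lra.
Qed.

Lemma pi_near0 k w : `|pi w - Qk p q k w 0| <= (2^-1) ^+ k.
Proof. by apply: pi_near; rewrite lexx ler01. Qed.

Lemma pi_01 w : 0 <= pi w <= 1.
Proof.
have /andP[b1 b2] := pi_bounds 0 w; rewrite /= in b1 b2.
by rewrite b1 b2.
Qed.

Lemma pi_unique x w C : (forall k, `|x - Qk p q k w 0| <= C * (2^-1) ^+ k) -> x = pi w.
Proof.
move=> H; apply/eqP; rewrite -subr_eq0; apply/eqP.
apply/normr0_eq0; apply: (@small_zero _ _ (C + 1)) => // k.
have h := pi_near0 k w.
rewrite mulrDl mul1r.
have -> : x - pi w = (x - Qk p q k w 0) - (pi w - Qk p q k w 0) by ring.
apply: le_trans (ler_normB _ _) _; apply: lerD => //; exact: h.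
Qed.

Lemma pi_shift w : pi w = Smap p q (w 0%N) (pi (shift w)).
Proof.
apply/esym/(@pi_unique _ _ 1) => -[|k].
  rewrite /= subr0 mul1r expr0.
  have /andP[a b] := Smap_01 (w 0%N) (pi_01 (shift w)).
  by rewrite ger0_norm.
rewrite /= Smap_sub normrM mul1r exprS.
have h := pi_near0 k (shift w).
rewrite (ger0_norm (ltW (rr_gt0 _))).
apply: ler_pM => //; first exact: ltW (rr_gt0 _).
exact: ltW (rr_lt _).
Qed.

Lemma pi_Q j w : pi w = Qk p q j w (pi (sh j w)).
Proof.
elim: j w => [|j IH] w /=.
  by congr pi; apply: funext => n.
by rewrite pi_shift IH.
Qed.

Definition ccons (i : 'I_4) w : nat -> 'I_4 := fun n => if n is n'.+1 then w n' else i.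

Lemma pi_cons i w : pi (ccons i w) = Smap p q i (pi w).
Proof. by rewrite pi_shift. Qed.

End Codes.

Section Refl.
Variable R : realType.
Variables p q : R.
Hypothesis hp : 0 < p < 2^-1.
Hypothesis hq : 0 < q < 2^-1.
Implicit Types (x y : R) (w : nat -> 'I_4).

Definition refl (i : 'I_4) : 'I_4 := inord ((i + 2) %% 4).

Lemma refl_val (i : 'I_4) : nat_of_ord (refl i) = ((i + 2) %% 4)%N.
Proof. by rewrite /refl inordK // ltn_pmod. Qed.

Lemma Smap_refl i x : Smap p q (refl i) (1 - x) = 1 - Smap p q i x.
Proof.
rewrite /Smap refl_val.
case: i => [[|[|[|[|n]]]] Hi] //=; ring.
Qed.

Lemma refl_small (i : 'I_4) : (2 <= refl i)%N = (i < 2)%N.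
Proof. by rewrite refl_val; case: i => [[|[|[|[|n]]]] Hi]. Qed.

Definition rw w : nat -> 'I_4 := fun n => refl (w n).

Lemma Q_refl k w y : Qk p q k (rw w) (1 - y) = 1 - Qk p q k w y.
Proof.
elim: k w => [|k IH] w //=.
by rewrite -Smap_refl -IH.
Qed.

Lemma pi_refl w : pi p q (rw w) = 1 - pi p q w.
Proof.
apply/esym/(@pi_unique _ _ _ hp hq _ _ 1) => k.
have e0 : Qk p q k (rw w) 0 = 1 - Qk p q k w 1 by rewrite -Q_refl subrr.
rewrite e0 mul1r.
have -> : 1 - pi p q w - (1 - Qk p q k w 1) = - (pi p q w - Qk p q k w 1) by ring.
by rewrite normrN; apply: pi_near => //; rewrite ler01 lexx.
Qed.
End Refl.

Section Attr.
Variable R : realType.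
Variables p q : R.
Hypothesis hp : 0 < p < 2^-1.
Hypothesis hq : 0 < q < 2^-1.
Variable K : set R.
Hypothesis hK : is_attractor p q K.
Implicit Types (x y : R) (w : nat -> 'I_4).

Lemma Kinv i y : K y -> K (Smap p q i y).
Proof.
case: hK => _ [_ KE] Ky; rewrite KE; exists i => //; exists y => //.
Qed.

Lemma Kdec x : K x -> exists i y, K y /\ x = Smap p q i y.
Proof.
case: hK => _ [_ KE]; rewrite {1}KE => -[i _ [y Ky <-]].
by exists i, y.
Qed.

Lemma Kclosed : closed K.
Proof. case: hK => _ [Kc _]; exact: compact_closed (@Rhausdorff R) Kc. Qed.

Lemma closed_approx (A : set R) x : closed A ->
  (forall e, 0 < e -> exists y, A y /\ `|x - y| < e) -> A x.
Proof.
move=> cA H; apply: cA => B /nbhs_ballP [e e0 sB].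
have [y [Ay xy]] := H e e0; exists y; split => //; apply: sB.
by rewrite -ball_normE.
Qed.

Lemma Kbound : exists M, 0 <= M /\ forall x, K x -> `|x| <= M.
Proof.
case: hK => _ [Kc _]; have := compact_bounded Kc.
move=> [M [Mreal]] /(_ (`|M| + 1)).
rewrite (le_lt_trans (ler_norm _)) ?ltrDl// => /(_ erefl) aM.
exists (`|M| + 1); split; first by rewrite addr_ge0.
by move=> x Kx; apply: aM.
Qed.

Lemma Q_K k w y : K y -> K (Qk p q k w y).
Proof. elim: k w => [|k IH] w //= Ky; apply: Kinv; exact: IH. Qed.

Lemma pi_K w : K (pi p q w).
Proof.
case: hK => -[y0 Ky0] _.
apply: closed_approx Kclosed _ => e e0.
have [k hk] := exp_small (1 + `|y0|) e0.
exists (Qk p q k w y0); split; first exact: Q_K.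
have -> : pi p q w - Qk p q k w y0 = (pi p q w - Qk p q k w 0) - (Qk p q k w y0 - Qk p q k w 0) by ring.
apply: le_lt_trans hk; apply: le_trans (ler_normB _ _) _.
rewrite mulrDl mul1r; apply: lerD; first exact: pi_near0.
rewrite Q_sub subr0 normrM mulrC (ger0_norm (ltW (rp_gt0 hp hq _ _))).
by apply: ler_wpM2l; [exact: normr_ge0 | exact: rp_le].
Qed.

Definition step x : 'I_4 * R :=
  xget (ord0, 0) (fun iy => K iy.2 /\ x = Smap p q iy.1 iy.2).

Lemma stepP x : K x -> K (step x).2 /\ x = Smap p q (step x).1 (step x).2.
Proof.
move=> Kx; have [i [y [Ky e]]] := Kdec Kx.
exact: (@xgetPex _ (ord0, 0) (fun iy => K iy.2 /\ x = Smap p q iy.1 iy.2)) (ex_intro _ (i, y) (conj Ky e)).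
Qed.

Definition code x : nat -> 'I_4 := fun n => (step (iter n (fun z => (step z).2) x)).1.

Lemma code_Q k x : K x -> K (iter k (fun z => (step z).2) x) /\
   x = Qk p q k (code x) (iter k (fun z => (step z).2) x).
Proof.
elim: k x => [|k IH] x Kx //=.
have [K1 e1] := stepP Kx.
have [K2 e2] := IH _ K1.
split; first by rewrite -iterSr in K2.
rewrite {1}e1 {1}e2 -iterSr; congr Smap.
by apply: Q_ext => n; rewrite /shift /code iterSr.
Qed.

Lemma pi_code x : K x -> pi p q (code x) = x.
Proof.
move=> Kx; have [M [M0 HM]] := Kbound.
apply/esym/(@pi_unique _ _ _ hp hq _ _ M) => k.
have [Kk e] := code_Q k Kx.
rewrite {1}e Q_sub subr0 normrM mulrC (ger0_norm (ltW (rp_gt0 hp hq _ _))).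
apply: ler_pM => //; [exact: ltW (rp_gt0 hp hq _ _)| exact: HM | exact: rp_le].
Qed.

Lemma K01 x : K x -> 0 <= x <= 1.
Proof. by move=> Kx; rewrite -(pi_code Kx); apply: pi_01. Qed.

End Attr.

Section Misc.
Variable R : realType.
Lemma half_le1 : (2^-1 : R) <= 1. Proof. lra. Qed.
Lemma half_ge0 : (0 : R) <= 2^-1. Proof. lra. Qed.
Lemma half_gt0 : (0 : R) < 2^-1. Proof. lra. Qed.

Lemma h_cont (s t : R) : continuous (fun z : R * R => s * z.1 - t * z.2).
Proof.
move=> z; apply: cvgB; apply: cvgM; try exact: cvg_cst.
  exact: cvg_fst.
exact: cvg_snd.
Qed.

Lemma sep_compact (C : set R) (s t : R) : compact C ->
  (forall a b, C a -> C b -> s * a <> t * b) ->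
  exists2 g, 0 < g & forall a b, C a -> C b -> g <= `|s * a - t * b|.
Proof.
move=> Cc H.
set h := (fun z : R * R => s * z.1 - t * z.2).
have Dc : compact (h @` (C `*` C)).
  apply: continuous_compact; last exact: compact_setX.
  by apply: continuous_subspaceT => z; apply: h_cont.
have Dcl := compact_closed (@Rhausdorff R) Dc.
have O := closed_openC Dcl.
have n0 : (~` (h @` (C `*` C))) 0.
  move=> [[a b] [/= Ca Cb]]; rewrite /h /= => /eqP; rewrite subr_eq0 => /eqP.
  exact: H.
have /nbhs_ballP [g g0 sB] := O 0 n0.
exists g => // a b Ca Cb; rewrite leNgt; apply/negP => lt.
have : ball (0 : R) g (h (a, b)) by rewrite -ball_normE /= sub0r normrN.
move/sB; apply; exists (a, b) => //.
Qed.

Lemma fin_min (P : nat -> R -> Prop) (N : nat) :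
  (forall i g g', 0 < g' -> g' <= g -> P i g -> P i g') ->
  (forall i, (i <= N)%N -> exists2 g, 0 < g & P i g) ->
  exists2 g, 0 < g & forall i, (i <= N)%N -> P i g.
Proof.
move=> mono; elim: N => [|N IH] H.
  have [g g0 Pg] := H 0%N (leqnn _); exists g => // i; rewrite leqn0 => /eqP ->.
  done.
have [g1 g10 P1] := IH (fun i iN => H i (leqW iN)).
have [g2 g20 P2] := H N.+1 (leqnn _).
exists (Num.min g1 g2); first by rewrite lt_min g10 g20.
move=> i; rewrite leq_eqVlt ltnS => /orP[/eqP ->|iN].
  by apply: mono P2; [rewrite lt_min g10 g20 | rewrite ge_min lexx orbT].
by apply: mono (P1 i iN); [rewrite lt_min g10 g20 | rewrite ge_min lexx].
Qed.

Lemma pow_half_le (x : R) n : 0 <= x -> x <= 2^-1 -> x ^+ n <= (2^-1) ^+ n.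
Proof.
move=> x0 x1; elim: n => [|n IH]; first by rewrite !expr0.
rewrite !exprS; apply: ler_pM => //; exact: exprn_ge0.
Qed.

Lemma pow_ge (r x : R) n : 0 <= r -> r <= x -> r ^+ n <= x ^+ n.
Proof.
move=> r0 rx; elim: n => [|n IH]; first by rewrite !expr0.
rewrite !exprS; apply: ler_pM => //; exact: exprn_ge0.
Qed.

Lemma half_pow_mono (a b : nat) : (a <= b)%N -> (2^-1 : R) ^+ b <= (2^-1) ^+ a.
Proof.
move=> ab; rewrite -(subnKC ab) exprD; apply: ler_piMr; first exact: exprn_ge0.
apply: exprn_ile1; [exact: half_ge0 | exact: half_le1].
Qed.

Lemma pow_mono_le1 (r : R) (a b : nat) : 0 <= r -> r <= 1 -> (a <= b)%N -> r ^+ b <= r ^+ a.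
Proof.
move=> r0 r1 ab; rewrite -(subnKC ab) exprD; apply: ler_piMr; first exact: exprn_ge0.
exact: exprn_ile1.
Qed.

End Misc.

Fixpoint cnt (b : nat) (j : nat) (w : nat -> 'I_4) : nat :=
  if j is j'.+1 then ((w 0%N : nat) == b) + cnt b j' (shift w) else 0%N.

Lemma cnt_sum j (w : nat -> 'I_4) : (forall l, (l < j)%N -> (w l < 2)%N) -> (cnt 0 j w + cnt 1 j w)%N = j.
Proof.
elim: j w => [|j IH] w H //=.
have := H 0%N isT; have := IH (shift w) (fun l lj => H l.+1 lj).
case: (w 0%N) => [[|[|n]] Hi] //= e _; lia.
Qed.

Lemma cnt_le b j (w : nat -> 'I_4) : (cnt b j w <= j)%N.
Proof. elim: j w => [|j IH] w //=; have := IH (shift w); case: (_ == b) => /=; lia. Qed.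

Section Letters.
Variable R : realType.
Variables p q : R.
Hypothesis hp : 0 < p < 2^-1.
Hypothesis hq : 0 < q < 2^-1.
Implicit Types (x y : R) (w : nat -> 'I_4).

Lemma Smap_small (i : 'I_4) x : (i < 2)%N -> Smap p q i x = rr p q i * x.
Proof. by case: i => [[|[|[|[|n]]]] Hi] //= _; rewrite /Smap /rr /=. Qed.

Lemma Smap_big (i : 'I_4) x : (2 <= i)%N -> Smap p q i x = rr p q i * x + 1 - rr p q i.
Proof. by case: i => [[|[|[|[|n]]]] Hi] //= _; rewrite /Smap /rr /=. Qed.

Lemma Q_small j w y : (forall l, (l < j)%N -> (w l < 2)%N) -> Qk p q j w y = rp p q j w * y.
Proof.
elim: j w => [|j IH] w H /=; first by rewrite mul1r.
rewrite Smap_small ?(H 0%N) // IH ?mulrA // => l lj; exact: (H l.+1).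
Qed.

Lemma rp_cnt j w : (forall l, (l < j)%N -> (w l < 2)%N) ->
  rp p q j w = p ^+ cnt 0 j w * q ^+ cnt 1 j w.
Proof.
elim: j w => [|j IH] w H /=; first by rewrite !expr0 mulr1.
rewrite IH; last by move=> l lj; exact: (H l.+1).
have := H 0%N isT; rewrite /rr.
case: (w 0%N) => [[|[|n]] Hi] //= _; rewrite ?expr0 ?exprS; ring.
Qed.

Lemma rp_ge j w : (Num.min p q) ^+ j <= rp p q j w.
Proof.
case/andP: hp => hp0 _; case/andP: hq => hq0 _.
elim: j w => [|j IH] w //=; rewrite exprS; apply: ler_pM => //.
- by rewrite le_min ltW // ltW.
- by rewrite exprn_ge0 // le_min ltW // ltW.
- by rewrite /rr; case: ifP => _; rewrite ge_min lexx ?orbT.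
Qed.

Lemma pi_small_le w N : (forall l, (l < N)%N -> (w l < 2)%N) -> pi p q w <= (2^-1) ^+ N.
Proof.
move=> H; rewrite (pi_Q hp hq N) Q_small //.
have /andP[a b] := pi_01 hp hq (sh N w).
apply: le_trans (rp_le hp hq N w); apply: ler_piMr => //; exact: ltW (rp_gt0 hp hq _ _).
Qed.

Lemma pi_first_small w : (w 0%N < 2)%N -> pi p q w <= Num.max p q.
Proof.
move=> h; rewrite pi_shift // Smap_small //.
have /andP[a b] := pi_01 hp hq (shift w).
apply: le_trans (_ : rr p q (w 0%N) <= _).
  apply: ler_piMr => //; exact: ltW (rr_gt0 hp hq _).
by rewrite /rr; case: ifP => _; rewrite le_max lexx ?orbT.
Qed.

Lemma pi_first_big w : (2 <= w 0%N)%N -> 1 - Num.max p q <= pi p q w.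
Proof.
move=> h; rewrite pi_shift // Smap_big //.
have /andP[a b] := pi_01 hp hq (shift w).
have r0 := ltW (rr_gt0 hp hq (w 0%N)).
have : rr p q (w 0%N) <= Num.max p q by rewrite /rr; case: ifP => _; rewrite le_max lexx ?orbT.
nra.
Qed.

End Letters.

Lemma first_big (w : nat -> 'I_4) N : ~~ all (fun l => (w l < 2)%N) (iota 0 N) ->
  exists j, [/\ (j < N)%N, (2 <= w j)%N & forall l, (l < j)%N -> (w l < 2)%N].
Proof.
move=> /allPn [l]; rewrite mem_iota add0n => /andP[_ lN]; rewrite -leqNgt => hl.
have ex : exists j, (2 <= w j)%N by exists l.
case: (ex_minnP ex) => j hj hmin.
exists j; split => //; first exact: leq_ltn_trans (hmin _ hl) lN.
by move=> l' l'j; rewrite ltnNge; apply/negP => /hmin; rewrite leqNgt l'j.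
Qed.

Lemma all_small (w : nat -> 'I_4) N : all (fun l => (w l < 2)%N) (iota 0 N) ->
  forall l, (l < N)%N -> (w l < 2)%N.
Proof. by move=> /allP H l lN; apply: H; rewrite mem_iota add0n. Qed.

Section TwoFold.
Variable R : realType.
Variables p q : R.
Hypothesis hp : 0 < p < 2^-1.
Hypothesis hq : 0 < q < 2^-1.
Variable K : set R.
Hypothesis hK : is_attractor p q K.
Hypothesis htf : twofold p q K.
Implicit Types (x y a b : R) (w : nat -> 'I_4).
Local Notation A := (Aset p q K).

Lemma A_pi w : (2 <= w 0%N)%N -> A (pi p q w).
Proof.
move=> h; rewrite pi_shift //.
have Kx := pi_K hp hq hK (shift w).
move: h; case E: (w 0%N) => [[|[|[|[|n]]]] Hi] //= _.
- left; exists (pi p q (shift w)) => //; congr Smap; apply: val_inj; by rewrite /= inordK.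
- right; exists (pi p q (shift w)) => //; congr Smap; apply: val_inj; by rewrite /= inordK.
Qed.

Lemma A_bnd a : A a -> 2^-1 < a /\ a <= 1.
Proof.
case/andP: hp => hp0 hp1; case/andP: hq => hq0 hq1.
by case=> -[y Ky <-]; have /andP[y0 y1] := K01 hp hq hK Ky; rewrite /Smap inordK //=; split; nra.
Qed.

Lemma iter_S0 m x : iter m (Smap p q (inord 0)) x = p ^+ m * x.
Proof.
elim: m => [|m IH] /=; first by rewrite mul1r.
by rewrite IH /Smap inordK //= exprS mulrA.
Qed.

Lemma iter_S1 m x : iter m (Smap p q (inord 1)) x = q ^+ m * x.
Proof.
elim: m => [|m IH] /=; first by rewrite mul1r.
by rewrite IH /Smap inordK //= exprS mulrA.
Qed.

Lemma tf_ne m n a b : (0 < m)%N -> (0 < n)%N -> A a -> A b -> p ^+ m * a <> q ^+ n * b.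
Proof.
move=> hm hn Aa Ab e.
have : (iter m (Smap p q (inord 0)) @` A `&` iter n (Smap p q (inord 1)) @` A) (p ^+ m * a).
  split; first by exists a => //; rewrite iter_S0.
  by exists b => //; rewrite iter_S1 e.
by rewrite htf.
Qed.

Lemma pq_pow_le d e : p ^+ d * q ^+ e <= (2^-1) ^+ (d + e).
Proof.
case/andP: hp => hp0 hp1; case/andP: hq => hq0 hq1.
rewrite exprD; apply: ler_pM.
- exact: exprn_ge0 (ltW hp0).
- exact: exprn_ge0 (ltW hq0).
- exact: pow_half_le (ltW hp0) (ltW hp1).
- exact: pow_half_le (ltW hq0) (ltW hq1).
Qed.

Lemma pq_pow_gt0 d e : 0 < p ^+ d * q ^+ e.
Proof.
case/andP: hp => hp0 hp1; case/andP: hq => hq0 hq1.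
by rewrite mulr_gt0 // exprn_gt0.
Qed.

Lemma small_ne d e a b : (0 < d + e)%N -> A a -> A b -> p ^+ d * q ^+ e * a <> b.
Proof.
move=> de Aa Ab E.
have [a1 a2] := A_bnd Aa; have [b1 b2] := A_bnd Ab.
have h1 := pq_pow_le d e.
have h2 : (2^-1 : R) ^+ (d + e) <= 2^-1.
  by have := half_pow_mono R de; rewrite expr1.
have h3 := pq_pow_gt0 d e.
move: E; set c := p ^+ d * q ^+ e => E.
have : c * a <= 2^-1 by apply: le_trans (_ : c * 1 <= _); [apply: ler_wpM2l; [exact: ltW|] | rewrite mulr1; exact: le_trans h2].
lra.
Qed.

Lemma disj_aux m n m' n' a b : (m' <= m)%N -> A a -> A b ->
  p ^+ m * q ^+ n * a = p ^+ m' * q ^+ n' * b -> m = m' /\ n = n'.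
Proof.
move=> mm Aa Ab E.
have pm0 : p ^+ m' != 0 by rewrite expf_neq0 // gt_eqF //; case/andP: hp.
have qn0 k : q ^+ k != 0 by rewrite expf_neq0 // gt_eqF //; case/andP: hq.
move: E; rewrite -(subnKC mm); set d := (m - m')%N => E.
have [nn|nn] := leqP n' n.
  move: E; rewrite -(subnKC nn); set e := (n - n')%N => E.
  have E2 : p ^+ m' * q ^+ n' * (p ^+ d * q ^+ e * a) = p ^+ m' * q ^+ n' * b.
    rewrite -E !exprD; ring.
  move/(mulfI (mulf_neq0 pm0 (qn0 _))): E2 => E2.
  case: (posnP (d + e)) => de.
    move/eqP: de; rewrite addn_eq0 => /andP[/eqP d0 /eqP e0].
    by rewrite d0 e0 !addn0.
  by have := small_ne de Aa Ab E2.
move: E; rewrite -(subnKC (ltnW nn)); set e := (n' - n)%N => E.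
have e0 : (0 < e)%N by rewrite subn_gt0.
have E2 : p ^+ m' * q ^+ n * (p ^+ d * a) = p ^+ m' * q ^+ n * (q ^+ e * b).
  have -> : p ^+ m' * q ^+ n * (p ^+ d * a) = p ^+ (m' + d) * q ^+ n * a by rewrite exprD; ring.
  rewrite E exprD; ring.
move/(mulfI (mulf_neq0 pm0 (qn0 _))): E2 => E2.
case: (posnP d) => d0.
  move: E2; rewrite d0 expr0 mul1r => E2.
  have := small_ne (d := 0) (e := e) (a := b) (b := a); rewrite add0n expr0 mul1r.
  by move=> /(_ e0 Ab Aa (esym E2)).
by have := tf_ne d0 e0 Aa Ab E2.
Qed.

Lemma disj m n m' n' a b : A a -> A b ->
  p ^+ m * q ^+ n * a = p ^+ m' * q ^+ n' * b -> m = m' /\ n = n'.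
Proof.
move=> Aa Ab E; have [mm|mm] := leqP m' m; first exact: disj_aux mm Aa Ab E.
by have [-> ->] := disj_aux (ltnW mm) Ab Aa (esym E).
Qed.

Lemma A_compact : compact A.
Proof.
case: hK => _ [Kc _].
have cS i : {within K, continuous (Smap p q i)}.
  apply: continuous_subspaceT => x.
  have -> : Smap p q i = (fun x => rr p q i * x + Smap p q i 0).
    by apply: funext => y; rewrite Smap_lin.
  apply: cvgD; last exact: cvg_cst.
  by apply: cvgM; [exact: cvg_cst | exact: cvg_id].
by apply: compactU; apply: continuous_compact.
Qed.

Lemma sep_pair m n m' n' : (m, n) <> (m', n') ->
  exists2 g, 0 < g & forall a b, A a -> A b ->
    g <= `|p ^+ m * q ^+ n * a - p ^+ m' * q ^+ n' * b|.
Proof.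
move=> ne; apply: sep_compact; first exact: A_compact.
by move=> a b Aa Ab E; have [e1 e2] := disj Aa Ab E; apply: ne; rewrite e1 e2.
Qed.

Definition sepP (g : R) m n m' n' := (m, n) <> (m', n') ->
  forall a b, A a -> A b -> g <= `|p ^+ m * q ^+ n * a - p ^+ m' * q ^+ n' * b|.

Lemma sepP_mono m n m' n' g g' : 0 < g' -> g' <= g -> sepP g m n m' n' -> sepP g' m n m' n'.
Proof. by move=> _ gg H ne a b Aa Ab; apply: le_trans gg (H ne a b Aa Ab). Qed.

Lemma sepN (N : nat) : exists2 g, 0 < g & forall m n m' n', (m <= N)%N -> (n <= N)%N ->
  (m' <= N)%N -> (n' <= N)%N -> sepP g m n m' n'.
Proof.
have := @fin_min R (fun m g => forall n, (n <= N)%N -> forall m', (m' <= N)%N ->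
   forall n', (n' <= N)%N -> sepP g m n m' n') N.
case.
- move=> i g g' g0 gg H n nN m' mN n' nN'; exact: sepP_mono g0 gg (H n nN m' mN n' nN').
- move=> m _.
  apply: (@fin_min R (fun n g => forall m', (m' <= N)%N ->
     forall n', (n' <= N)%N -> sepP g m n m' n') N).
    move=> i g g' g0 gg H m' mN n' nN'; exact: sepP_mono g0 gg (H m' mN n' nN').
  move=> n _.
  apply: (@fin_min R (fun m' g => forall n', (n' <= N)%N -> sepP g m n m' n') N).
    move=> i g g' g0 gg H n' nN'; exact: sepP_mono g0 gg (H n' nN').
  move=> m' _.
  apply: (@fin_min R (fun n' g => sepP g m n m' n') N).
    move=> i g g' g0 gg H; exact: sepP_mono g0 gg H.
  move=> n' _.
  case: (pselect ((m, n) = (m', n'))) => e.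
    by exists 1 => // ne; case: ne.
  have [g g0 H] := sep_pair e; exists g => // _; exact: H.
move=> g g0 H; exists g => // m n m' n' mN nN m'N n'N; exact: H.
Qed.

End TwoFold.

Lemma pi_dec (R : realType) (p q : R) : 0 < p < 2^-1 -> 0 < q < 2^-1 ->
  forall (w : nat -> 'I_4) j, (forall l, (l < j)%N -> (w l < 2)%N) ->
  pi p q w = p ^+ cnt 0 j w * q ^+ cnt 1 j w * pi p q (sh j w).
Proof. by move=> hp hq w j H; rewrite (pi_Q hp hq j) Q_small // rp_cnt. Qed.

Lemma refl_lt2 (i : 'I_4) : (2 <= i)%N -> (refl i < 2)%N.
Proof. by move=> h; rewrite ltnNge refl_small ltnNge h. Qed.

Lemma norm_1sub (R : realType) (x y : R) : `|(1 - x) - (1 - y)| = `|x - y|.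
Proof. by rewrite -normrN; congr `|_|; ring. Qed.

Section Cont.
Variable R : realType.
Variables p q p' q' : R.
Hypothesis hp : 0 < p < 2^-1.
Hypothesis hq : 0 < q < 2^-1.
Hypothesis hp' : 0 < p' < 2^-1.
Hypothesis hq' : 0 < q' < 2^-1.
Variable K : set R.
Hypothesis hK : is_attractor p q K.
Hypothesis htf : twofold p q K.
Implicit Types (w v : nat -> 'I_4).

Lemma cont_k k : exists2 d, 0 < d & forall w v,
  `|pi p q w - pi p q v| < d -> `|pi p' q' w - pi p' q' v| <= (2^-1) ^+ k.
Proof.
case/andP: hp => hp0 hp1; case/andP: hq => hq0 hq1.
elim: k => [|k [dk dk0 Hk]].
  exists 1 => // w v _; rewrite expr0.
  have /andP[a1 a2] := pi_01 hp' hq' w; have /andP[b1 b2] := pi_01 hp' hq' v.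
  rewrite ler_norml; apply/andP; split; lra.
set N := k.+1.
set rho := Num.min p q.
have rho0 : 0 < rho by rewrite lt_min hp0 hq0.
have rho1 : rho <= 1 by rewrite ge_min; apply/orP; left; lra.
set tau := rho ^+ N / 2.
have tau0 : 0 < tau by rewrite divr_gt0 // exprn_gt0.
have t40 : 0 < tau / 4 by rewrite divr_gt0.
have [N1' hN1'] := exp_small 1 t40.
set N1 := (N1' + N)%N.
have hN1 : (2^-1 : R) ^+ N1 < tau / 4.
  apply: le_lt_trans (half_pow_mono R (leq_addr N N1')) _; by rewrite mul1r in hN1'.
have NN1 : (N <= N1)%N by rewrite leq_addl.
have [g g0 Hg] := sepN hp hq hK htf N1.
set g1 := 1 - 2 * Num.max p q.
have g10 : 0 < g1.
  rewrite /g1; have : Num.max p q < 2^-1 by rewrite gt_max hp1 hq1.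
  lra.
set d := Num.min (Num.min g1 (tau / 2)) (Num.min g (dk * rho ^+ N1)).
have d0 : 0 < d by rewrite !lt_min g10 g0 divr_gt0 //= mulr_gt0 // exprn_gt0.
have dg1 : d <= g1 by rewrite !ge_min lexx.
have dg1' : d <= 1 - 2 * Num.max p q := dg1.
have dtau : d <= tau / 2 by rewrite !ge_min lexx !orbT.
have dg : d <= g by rewrite /d ge_min; apply/orP; right; rewrite ge_min lexx.
have ddk : d <= dk * rho ^+ N1 by rewrite /d ge_min; apply/orP; right; rewrite ge_min lexx orbT.
exists d => //.
have prod_ge c0 c1 : rho ^+ (c0 + c1) <= p ^+ c0 * q ^+ c1.
  rewrite exprD; apply: ler_pM; try exact: exprn_ge0 (ltW rho0).
  - by apply: pow_ge; [exact: ltW | rewrite ge_min lexx].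
  - by apply: pow_ge; [exact: ltW | rewrite ge_min lexx orbT].
have shallow : forall w v j, (w 0%N < 2)%N -> (j < N)%N -> (2 <= w j)%N ->
    (forall l, (l < j)%N -> (w l < 2)%N) -> `|pi p q w - pi p q v| < d ->
    `|pi p' q' w - pi p' q' v| <= (2^-1) ^+ N.
  move=> w v j w0 jN wj wl dist.
  have j0 : (0 < j)%N by case: j jN wj wl => // _; rewrite leqNgt w0.
  have Aa : Aset p q K (pi p q (sh j w)) by apply: A_pi => //; rewrite /sh addn0.
  have [a1 a2] := A_bnd hp hq hK Aa.
  have ew := pi_dec hp hq wl; have ew' := pi_dec hp' hq' wl.
  have cs := cnt_sum wl.
  have sge : rho ^+ j <= p ^+ cnt 0 j w * q ^+ cnt 1 j w by rewrite -{1}cs.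
  have sge' : rho ^+ N1 <= p ^+ cnt 0 j w * q ^+ cnt 1 j w.
    apply: le_trans sge; apply: pow_mono_le1 => //; [exact: ltW | exact: leq_trans (ltnW jN) NN1].
  have rN : rho ^+ N <= rho ^+ j by apply: pow_mono_le1 => //; [exact: ltW | exact: ltnW].
  have piw : tau <= pi p q w.
    rewrite ew /tau; apply: (@le_trans _ _ (rho ^+ j * 2^-1)).
      by rewrite ler_pM2r // invr_gt0.
    apply: ler_pM; [exact: exprn_ge0 (ltW rho0)|lra|exact: sge|exact: ltW a1].
  case allv : (all (fun l => (v l < 2)%N) (iota 0 N1)).
    have := pi_small_le hp hq (all_small allv).
    move: dist; rewrite ltr_norml => /andP[_ ?] ?; lra.
  have [j' [j'N v'j v'l]] := first_big (negbT allv).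
  have Ab : Aset p q K (pi p q (sh j' v)) by apply: A_pi => //; rewrite /sh addn0.
  have ev := pi_dec hp hq v'l; have ev' := pi_dec hp' hq' v'l.
  case: (pselect ((cnt 0 j w, cnt 1 j w) = (cnt 0 j' v, cnt 1 j' v))) => ec; last first.
    have := Hg (cnt 0 j w) (cnt 1 j w) (cnt 0 j' v) (cnt 1 j' v).
    have l1 := cnt_le 0 j w; have l2 := cnt_le 1 j w.
    have l3 := cnt_le 0 j' v; have l4 := cnt_le 1 j' v.
    have jN1 : (j <= N1)%N := leq_trans (ltnW jN) NN1.
    move=> /(_ (leq_trans l1 jN1) (leq_trans l2 jN1) (leq_trans l3 (ltnW j'N)) (leq_trans l4 (ltnW j'N)) ec _ _ Aa Ab).
    rewrite -ew -ev => h; lra.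
  case: ec => e0 e1.
  move: ev ev'; rewrite -e0 -e1 => ev ev'.
  set s := p ^+ cnt 0 j w * q ^+ cnt 1 j w.
  have s0 : 0 < s by rewrite mulr_gt0 // exprn_gt0.
  have dab : `|pi p q (sh j w) - pi p q (sh j' v)| < dk.
    have : s * `|pi p q (sh j w) - pi p q (sh j' v)| < dk * s.
      rewrite -(ger0_norm (ltW s0)) -normrM mulrBr -ew -ev (ger0_norm (ltW s0)).
      apply: lt_le_trans dist _; apply: le_trans ddk _; apply: ler_wpM2l => //; exact: ltW.
    by rewrite mulrC ltr_pM2r.
  have := Hk _ _ dab.
  rewrite ew' ev' -mulrBr normrM (ger0_norm (ltW (pq_pow_gt0 hp' hq' _ _))).
  move=> hk.
  have s'le := pq_pow_le hp' hq' (cnt 0 j w) (cnt 1 j w); rewrite cs in s'le.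
  have jh : (2^-1 : R) ^+ j <= 2^-1 by have := half_pow_mono R j0; rewrite expr1.
  rewrite /N exprS; apply: ler_pM => //.
    exact: ltW (pq_pow_gt0 hp' hq' _ _).
  exact: le_trans s'le jh.
have core : forall w v, (w 0%N < 2)%N -> (v 0%N < 2)%N -> `|pi p q w - pi p q v| < d ->
    `|pi p' q' w - pi p' q' v| <= (2^-1) ^+ N.
  move=> w v w0 v0 dist.
  case allw : (all (fun l => (w l < 2)%N) (iota 0 N)); last first.
    have [j [jN wj wl]] := first_big (negbT allw).
    exact: shallow w0 jN wj wl dist.
  case allv : (all (fun l => (v l < 2)%N) (iota 0 N)); last first.
    have [j [jN vj vl]] := first_big (negbT allv).
    by rewrite distrC; apply: shallow v0 jN vj vl _; rewrite distrC.
  have := pi_small_le hp' hq' (all_small allw); have := pi_small_le hp' hq' (all_small allv).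
  have /andP[a1 _] := pi_01 hp' hq' w; have /andP[b1 _] := pi_01 hp' hq' v.
  move=> h1 h2; rewrite ler_norml; apply/andP; split; lra.
move=> w v dist.
case w0 : (w 0%N < 2)%N; case v0 : (v 0%N < 2)%N.
- exact: core.
- have v2 : (2 <= v 0%N)%N by rewrite leqNgt v0.
  have := pi_first_small hp hq w0; have := pi_first_big hp hq v2.
  move: dist; rewrite ltr_norml => /andP[? ?] ? ?; lra.
- have w2 : (2 <= w 0%N)%N by rewrite leqNgt w0.
  have := pi_first_small hp hq v0; have := pi_first_big hp hq w2.
  move: dist; rewrite ltr_norml => /andP[? ?] ? ?; lra.
- have w2 : (2 <= w 0%N)%N by rewrite leqNgt w0.
  have v2 : (2 <= v 0%N)%N by rewrite leqNgt v0.
  have := core (rw w) (rw v) (refl_lt2 w2) (refl_lt2 v2).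
  by rewrite !pi_refl // !norm_1sub; apply.
Qed.

End Cont.

Lemma within_eps (R : realType) (A : set R) (f : R -> R) :
  (forall x, A x -> forall e, 0 < e -> exists2 d, 0 < d &
     forall y, A y -> `|x - y| < d -> `|f x - f y| < e) ->
  {within A, continuous f}.
Proof.
move=> H; apply/subspace_continuousP => x Ax.
apply/cvgrPdist_lt => e e0.
have [d d0 Hd] := H x Ax e e0.
rewrite near_withinE.
apply/nbhs_ballP; exists d => // y /= xy Ay.
by apply: Hd => //; move: xy; rewrite -ball_normE.
Qed.

Section PartI.
Variable R : realType.
Variables p q p' q' : R.
Hypothesis hp : 0 < p < 2^-1.
Hypothesis hq : 0 < q < 2^-1.
Hypothesis hp' : 0 < p' < 2^-1.
Hypothesis hq' : 0 < q' < 2^-1.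
Variables K K' : set R.
Hypothesis hK : is_attractor p q K.
Hypothesis hK' : is_attractor p' q' K'.
Hypothesis htf : twofold p q K.
Hypothesis htf' : twofold p' q' K'.

Lemma transfer w v : pi p q w = pi p q v -> pi p' q' w = pi p' q' v.
Proof.
move=> e; apply/eqP; rewrite -subr_eq0; apply/eqP/normr0_eq0.
apply: (@small_zero _ _ 1) => // k; rewrite mul1r.
have [d d0 H] := cont_k hp hq hp' hq' hK htf k.
by apply: H; rewrite e subrr normr0.
Qed.

Lemma transfer' w v : pi p' q' w = pi p' q' v -> pi p q w = pi p q v.
Proof.
move=> e; apply/eqP; rewrite -subr_eq0; apply/eqP/normr0_eq0.
apply: (@small_zero _ _ 1) => // k; rewrite mul1r.
have [d d0 H] := cont_k hp' hq' hp hq hK' htf' k.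
by apply: H; rewrite e subrr normr0.
Qed.

Definition fK x := pi p' q' (code p q K x).
Definition gK y := pi p q (code p' q' K' y).

Lemma fK_cont : {within K, continuous fK}.
Proof.
apply: within_eps => x Kx e e0.
have [k hk] := exp_small 1 e0; rewrite mul1r in hk.
have [d d0 H] := cont_k hp hq hp' hq' hK htf k.
exists d => // y Ky xy; apply: le_lt_trans hk; apply: H.
by rewrite !pi_code.
Qed.

Lemma gK_cont : {within K', continuous gK}.
Proof.
apply: within_eps => x Kx e e0.
have [k hk] := exp_small 1 e0; rewrite mul1r in hk.
have [d d0 H] := cont_k hp' hq' hp hq hK' htf' k.
exists d => // y Ky xy; apply: le_lt_trans hk; apply: H.
by rewrite !pi_code.
Qed.

Lemma part1 : exists f : R -> R, homeo_on K K' f /\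
     forall (i : 'I_4) x, K x -> f (Smap p q i x) = Smap p' q' i (f x).
Proof.
exists fK; split.
  exists gK; split; first by move=> x Kx; apply: pi_K.
  split; first by move=> y Ky; apply: pi_K.
  split.
    move=> x Kx; rewrite /gK -{2}(pi_code hp hq hK Kx); apply: transfer'.
    by rewrite pi_code //; apply: pi_K.
  split.
    move=> y Ky; rewrite /fK -{2}(pi_code hp' hq' hK' Ky); apply: transfer.
    by rewrite pi_code //; apply: pi_K.
  split; [exact: fK_cont | exact: gK_cont].
move=> i x Kx; rewrite /fK -(pi_cons hp' hq'); apply: transfer.
by rewrite pi_cons // !pi_code //; apply: Kinv.
Qed.
End PartI.

Section Alg.
Variable R : realType.

Lemma divr_gt0_neg (x y : R) : x < 0 -> y < 0 -> 0 < x / y.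
Proof. by move=> x0 y0; rewrite -mulrNN -invrN divr_gt0 // oppr_gt0. Qed.

Definition ev (x y : R) (i m j n : nat) := (i%:R - m%:R) * x + (j%:R - n%:R) * y.

Lemma ratio_half (x y x' y' : R) : x < 0 -> y < 0 -> x' < 0 -> y' < 0 ->
  (forall i m j n, 0 < ev x y i m j n -> 0 < ev x' y' i m j n) -> ~ (x / y < x' / y').
Proof.
move=> x0 y0 x'0 y'0 O rr'.
set r := x / y; set r' := x' / y'.
have r0 : 0 < r by rewrite /r divr_gt0_neg.
have ex : x = r * y by rewrite /r divfK // lt_eqF.
have ex' : x' = r' * y' by rewrite /r' divfK // lt_eqF.
set a := (Num.truncn ((r' - r)^-1)).+1.
have ha : (r' - r)^-1 < a%:R := truncnS_gt _.
have ha' : 1 < a%:R * (r' - r).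
  have d0 : 0 < r' - r by rewrite subr_gt0.
  by rewrite -ltr_pdivrMr // div1r.
set N := (Num.truncn (a%:R * r)).+1.
have hN1 : a%:R * r < N%:R := truncnS_gt _.
have hN2 : (Num.truncn (a%:R * r))%:R <= a%:R * r by rewrite truncn_le mulr_ge0 // ltW.
have hN3 : (N%:R : R) = (Num.truncn (a%:R * r))%:R + 1 by rewrite -natr1.
have := O a 0 0 N; rewrite /ev !subr0 !sub0r.
have e1 : a%:R * x + - N%:R * y = y * (a%:R * r - N%:R) by rewrite ex; ring.
have e2 : a%:R * x' + - N%:R * y' = y' * (a%:R * r' - N%:R) by rewrite ex'; ring.
rewrite e1 e2 => /(_ _) h.
have : 0 < y * (a%:R * r - N%:R) by rewrite nmulr_rgt0 // subr_lt0.
move/h; rewrite nmulr_rgt0 // subr_lt0.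
nra.
Qed.

Variables al be ga al' be' ga' : R.
Hypothesis al0 : al < 0.
Hypothesis be0 : be < 0.
Hypothesis ga0 : ga < 0.
Hypothesis al'0 : al' < 0.
Hypothesis be'0 : be' < 0.
Hypothesis ga'0 : ga' < 0.
Hypothesis O1 : forall i m j n, (0 < ev al be i m j n) = (0 < ev al' be' i m j n).
Hypothesis indep : forall a b : nat, (0 < a)%N -> (0 < b)%N -> a%:R * al <> b%:R * be.
Hypothesis cutA : forall i m j n, ga < ev al be i m j n -> ga' < ev al' be' i m j n.
Hypothesis cutB : forall i m j n, ev al be i m j n < ga -> ev al' be' i m j n < ga'.
Hypothesis s1 : expR al + expR ga = 1.
Hypothesis s2 : expR al' + expR ga' = 1.

Definition Lam z := exists i m j n, z = ev al be i m j n.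

Lemma Lam_add x y : Lam x -> Lam y -> Lam (x + y).
Proof.
move=> [i [m [j [n ->]]]] [i' [m' [j' [n' ->]]]].
exists (i + i')%N, (m + m')%N, (j + j')%N, (n + n')%N; rewrite /ev !natrD; ring.
Qed.

Lemma Lam_opp x : Lam x -> Lam (- x).
Proof. move=> [i [m [j [n ->]]]]; exists m, i, n, j; rewrite /ev; ring. Qed.

Lemma Lam_muln (k : nat) x : Lam x -> Lam (k%:R * x).
Proof.
move=> [i [m [j [n ->]]]].
exists (k * i)%N, (k * m)%N, (k * j)%N, (k * n)%N; rewrite /ev !natrM; ring.
Qed.

Lemma Lam_mulz (z : int) x : Lam x -> Lam (z%:~R * x).
Proof.
move=> Lx; case: z => k.
  by rewrite -pmulrn; apply: Lam_muln.
by rewrite NegzE intrN -pmulrn mulNr; apply/Lam_opp/Lam_muln.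
Qed.

Lemma Lam_al : Lam (- al).
Proof. by exists 0%N, 1%N, 0%N, 0%N; rewrite /ev; ring. Qed.

Lemma Lam_be : Lam (- be).
Proof. by exists 0%N, 0%N, 0%N, 1%N; rewrite /ev; ring. Qed.

Lemma mod_step u lam : Lam u -> Lam lam -> 0 < u -> 0 < lam ->
  (exists l2, [/\ Lam l2, 0 < l2 & l2 <= lam / 2]) \/
  (exists k : nat, (0 < k)%N /\ u = k%:R * lam).
Proof.
move=> Lu Ll u0 l0.
set z := Num.floor (u / lam).
set w := u - z%:~R * lam.
have Lw : Lam w by apply: Lam_add Lu _; rewrite -mulNr -intrN; apply: Lam_mulz.
have h1 : z%:~R <= u / lam := floor_le _.
have h2 : u / lam < (z + 1)%:~R := floorD1_gt _.
rewrite intrD in h2.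
have h1' : z%:~R * lam <= u by rewrite -ler_pdivlMr.
have h2' : u < (z%:~R + 1) * lam by rewrite -ltr_pdivrMr.
have w0 : 0 <= w by rewrite subr_ge0.
have wl : w < lam by rewrite /w; lra.
have [wp|we] := ltrP 0 w.
  left; have [wh|wh] := lerP w (lam / 2).
    by exists w; split.
  exists (lam - w); split; [by apply: Lam_add => //; apply: Lam_opp | by rewrite subr_gt0 | lra].
have w00 : w = 0 by apply/eqP; rewrite eq_le we w0.
right; have ez : u = z%:~R * lam by move: w00; rewrite /w => /eqP; rewrite subr_eq0 => /eqP.
have zp : 0 < z%:~R :> R by rewrite -(pmulr_lgt0 _ l0) -ez.
case: z ez zp {h1 h2 h1' h2' w Lw w0 wl we w00} => k ez zp.
  exists k; split; last by rewrite ez -pmulrn.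
  by move: zp; rewrite -pmulrn ltr0n.
by move: zp; rewrite NegzE intrN -pmulrn oppr_gt0 ltrn0.
Qed.

Lemma half_step lam : Lam lam -> 0 < lam -> exists l2, [/\ Lam l2, 0 < l2 & l2 <= lam / 2].
Proof.
move=> Ll l0.
have al1 : 0 < - al by rewrite oppr_gt0.
have be1 : 0 < - be by rewrite oppr_gt0.
case: (mod_step Lam_al Ll al1 l0) => [h|[k1 [k10 e1]]]; first exact: h.
case: (mod_step Lam_be Ll be1 l0) => [h|[k2 [k20 e2]]]; first exact: h.
exfalso; apply: (indep k20 k10).
have : k2%:R * (- al) = k1%:R * (- be) by rewrite e1 e2; ring.
by rewrite !mulrN => /oppr_inj.
Qed.

Lemma small_Lam e : 0 < e -> exists l, [/\ Lam l, 0 < l & l < e].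
Proof.
move=> e0.
have H : forall k, exists l, [/\ Lam l, 0 < l & l <= - al * (2^-1) ^+ k].
  elim=> [|k [l [Ll l0 lk]]].
    by exists (- al); split; [exact: Lam_al | rewrite oppr_gt0 | rewrite expr0 mulr1].
  have [l2 [L2 l20 l2h]] := half_step Ll l0.
  exists l2; split => //; apply: le_trans l2h _; rewrite exprS mulrCA.
  move: lk; set c := - al * _; lra.
have [k hk] := exp_small (- al) e0.
have [l [Ll l0 lk]] := H k; exists l; split => //; exact: le_lt_trans hk.
Qed.

Lemma dense_Lam x y : x < y -> exists l, [/\ Lam l, x < l & l < y].
Proof.
move=> xy; have yx : 0 < y - x by rewrite subr_gt0.
have [s [Ls s0 sl]] := small_Lam yx.
set z := Num.floor (x / s) + 1.
exists (z%:~R * s); split; first exact: Lam_mulz.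
  have h := floorD1_gt (x / s); rewrite -/z in h.
  by rewrite -ltr_pdivrMr.
have h := floor_le (x / s).
have : (Num.floor (x / s))%:~R * s <= x by rewrite -ler_pdivlMr.
rewrite /z intrD; lra.
Qed.

Lemma final_eq : al' = al /\ be' = be.
Proof.
have r1 : ~ (al / be < al' / be').
  by apply: ratio_half => // i m j n; rewrite O1.
have r2 : ~ (al' / be' < al / be).
  by apply: ratio_half => // i m j n; rewrite O1.
have er : al / be = al' / be'.
  by apply/eqP; rewrite eq_le !leNgt; apply/andP; split; apply/negP.
set t := al' / al.
have t0 : 0 < t by rewrite /t divr_gt0_neg.
have eal : al' = t * al by rewrite /t divfK // lt_eqF.
have ebe : be' = t * be.
  have : al * be' = al' * be.
    by move/eqP: er; rewrite eqr_div ?(lt_eqF be0) ?(lt_eqF be'0) // => /eqP.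
  rewrite eal => h; apply: (mulfI (negbT (lt_eqF al0))); rewrite h; ring.
have evt i m j n : ev al' be' i m j n = t * ev al be i m j n by rewrite /ev eal ebe; ring.
have ega : ga' = t * ga.
  apply/eqP; rewrite eq_le !leNgt; apply/andP; split; apply/negP => h.
  - have hh : ga < ga' / t by rewrite ltr_pdivlMr // mulrC.
    have [l [[i [m [j [n el]]]] h1 h2]] := dense_Lam hh.
    have := @cutA i m j n; rewrite -el => /(_ h1).
    rewrite evt -el; rewrite ltr_pdivlMr // in h2; lra.
  - have hh : ga' / t < ga by rewrite ltr_pdivrMr // mulrC.
    have [l [[i [m [j [n el]]]] h1 h2]] := dense_Lam hh.
    have := @cutB i m j n; rewrite -el => /(_ h2).
    rewrite evt -el; rewrite ltr_pdivrMr // in h1; lra.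
have t1 : t = 1.
  clearbody t.
  apply/eqP; rewrite eq_le !leNgt; apply/andP; split; apply/negP => h.
  - have a1 : expR al' < expR al.
      rewrite ltr_expR eal.
      have : 0 < (t - 1) * (- al) by rewrite mulr_gt0 // ?subr_gt0 ?oppr_gt0.
      lra.
    have a2 : expR ga' < expR ga.
      rewrite ltr_expR ega.
      have : 0 < (t - 1) * (- ga) by rewrite mulr_gt0 // ?subr_gt0 ?oppr_gt0.
      lra.
    by have := ltrD a1 a2; rewrite s2 s1 ltxx.
  - have a1 : expR al < expR al'.
      rewrite ltr_expR eal.
      have : 0 < (1 - t) * (- al) by rewrite mulr_gt0 // ?subr_gt0 ?oppr_gt0.
      lra.
    have a2 : expR ga < expR ga'.
      rewrite ltr_expR ega.
      have : 0 < (1 - t) * (- ga) by rewrite mulr_gt0 // ?subr_gt0 ?oppr_gt0.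
      lra.
    by have := ltrD a1 a2; rewrite s2 s1 ltxx.
by rewrite eal ebe t1 !mul1r.
Qed.
End Alg.

Section Logs.
Variable R : realType.

Lemma expln (x : R) : 0 < x -> expR (ln x) = x.
Proof. by move=> x0; rewrite lnK // posrE. Qed.

Lemma expmn (x y : R) m n : 0 < x -> 0 < y ->
  expR (m%:R * ln x + n%:R * ln y) = x ^+ m * y ^+ n.
Proof. by move=> x0 y0; rewrite expRD !expRM_natl !expln. Qed.

Lemma ev_exp (x y : R) i m j n : 0 < x -> 0 < y ->
  (0 < ev (ln x) (ln y) i m j n) = (x ^+ m * y ^+ n < x ^+ i * y ^+ j).
Proof.
move=> x0 y0.
have -> : ev (ln x) (ln y) i m j n = (i%:R * ln x + j%:R * ln y) - (m%:R * ln x + n%:R * ln y).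
  by rewrite /ev; ring.
by rewrite subr_gt0 -(@expmn x y m n x0 y0) -(@expmn x y i j x0 y0) ltr_expR.
Qed.

Lemma ev_cut1 (x y z : R) i m j n : 0 < x -> 0 < y -> 0 < z ->
  (ln z < ev (ln x) (ln y) i m j n) = (x ^+ m * y ^+ n * z < x ^+ i * y ^+ j).
Proof.
move=> x0 y0 z0.
have -> : ev (ln x) (ln y) i m j n = (i%:R * ln x + j%:R * ln y) - (m%:R * ln x + n%:R * ln y).
  by rewrite /ev; ring.
by rewrite ltrBrDl -(@expmn x y m n x0 y0) -(@expmn x y i j x0 y0) -{2}(expln z0) -expRD ltr_expR.
Qed.

Lemma ev_cut2 (x y z : R) i m j n : 0 < x -> 0 < y -> 0 < z ->
  (ev (ln x) (ln y) i m j n < ln z) = (x ^+ i * y ^+ j < x ^+ m * y ^+ n * z).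
Proof.
move=> x0 y0 z0.
have -> : ev (ln x) (ln y) i m j n = (i%:R * ln x + j%:R * ln y) - (m%:R * ln x + n%:R * ln y).
  by rewrite /ev; ring.
by rewrite ltrBlDl -(@expmn x y m n x0 y0) -(@expmn x y i j x0 y0) -{2}(expln z0) -expRD ltr_expR.
Qed.
End Logs.

Definition o1 : 'I_4 := @Ordinal 4 1 isT.
Definition o2 : 'I_4 := @Ordinal 4 2 isT.

Section PartII.
Variable R : realType.
Variables p q p' q' : R.
Hypothesis hp : 0 < p < 2^-1.
Hypothesis hq : 0 < q < 2^-1.
Hypothesis hp' : 0 < p' < 2^-1.
Hypothesis hq' : 0 < q' < 2^-1.
Variables K K' : set R.
Hypothesis hK : is_attractor p q K.
Hypothesis hK' : is_attractor p' q' K'.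
Hypothesis htf : twofold p q K.
Variable f : R -> R.
Hypothesis hf : homeo_on K K' f.
Hypothesis hcomm : forall (i : 'I_4) x, K x -> f (Smap p q i x) = Smap p' q' i (f x).
Variable F : R -> R.
Hypothesis hF : homeo_on `[0, 1] `[0, 1] F.
Hypothesis hFf : forall x, K x -> F x = f x.

Lemma fix0 (a x : R) : a < 1 -> x = a * x -> x = 0.
Proof.
move=> a1 e; have : (1 - a) * x = 0 by rewrite mulrBl mul1r -e subrr.
move/eqP; rewrite mulf_eq0 => /orP[|/eqP //]; rewrite subr_eq0 => /eqP E.
by move: a1; rewrite -E ltxx.
Qed.

Lemma fix1 (a x : R) : a < 1 -> x = a * x + 1 - a -> x = 1.
Proof.
move=> a1 e; apply/eqP; rewrite -subr_eq0; apply/eqP; apply: (@fix0 a) => //.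
by rewrite {1}e; ring.
Qed.

Lemma p_lt1 : p < 1. Proof. case/andP: hp => _ h; lra. Qed.
Lemma p'_lt1 : p' < 1. Proof. case/andP: hp' => _ h; lra. Qed.

Lemma K0 : K 0.
Proof.
have e : pi p q (fun _ => ord0) = 0.
  apply: (@fix0 p) ; first exact: p_lt1.
  by rewrite {1}(pi_shift hp hq (fun _ => ord0)).
by rewrite -e; apply: pi_K.
Qed.

Lemma K1 : K 1.
Proof.
have e : pi p q (fun _ => o2) = 1.
  apply: (@fix1 p) ; first exact: p_lt1.
  by rewrite {1}(pi_shift hp hq (fun _ => o2)).
by rewrite -e; apply: pi_K.
Qed.

Lemma f0 : f 0 = 0.
Proof.
apply: (@fix0 p'); first exact: p'_lt1.
by have := hcomm ord0 K0; rewrite /Smap /= mulr0.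
Qed.

Lemma f1 : f 1 = 1.
Proof.
apply: (@fix1 p'); first exact: p'_lt1.
by have := hcomm o2 K1; rewrite /Smap /= mulr1 [p + 1]addrC addrK.
Qed.
Lemma fpow0 m x : K x -> K (p ^+ m * x) /\ f (p ^+ m * x) = p' ^+ m * f x.
Proof.
move=> Kx; elim: m => [|m [Km fm]]; first by rewrite !mul1r.
have e : p ^+ m.+1 * x = Smap p q ord0 (p ^+ m * x) by rewrite /Smap /= exprS mulrA.
rewrite e; split; first exact: Kinv.
by rewrite hcomm // fm /Smap /= exprS mulrA.
Qed.

Lemma fpow1 n x : K x -> K (q ^+ n * x) /\ f (q ^+ n * x) = q' ^+ n * f x.
Proof.
move=> Kx; elim: n => [|n [Kn fn]]; first by rewrite !mul1r.
have e : q ^+ n.+1 * x = Smap p q o1 (q ^+ n * x) by rewrite /Smap /= exprS mulrA.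
rewrite e; split; first exact: Kinv.
by rewrite hcomm // fn /Smap /= exprS mulrA.
Qed.

Lemma fmono m n x : K x -> K (p ^+ m * q ^+ n * x) /\ f (p ^+ m * q ^+ n * x) = p' ^+ m * q' ^+ n * f x.
Proof.
move=> Kx; have [K1' f1'] := fpow1 n Kx.
have [K2 f2] := fpow0 m K1'.
by rewrite -mulrA; split => //; rewrite f2 f1' mulrA.
Qed.

Lemma Kp : K (1 - p) /\ f (1 - p) = 1 - p'.
Proof.
have e : 1 - p = Smap p q o2 0 by rewrite /Smap /=; ring.
rewrite e; split; first exact: (Kinv hK o2 K0).
by rewrite (hcomm _ K0) f0 /Smap /=; ring.
Qed.

Lemma F_incr : forall x y, K x -> K y -> (x < y) = (f x < f y).
Proof.
case: hF => g [h1 [h2 [h3 [h4 [h5 h6]]]]].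
have inj : {in `[0, 1] &, injective F}.
  move=> x y xI yI e; rewrite -(h3 x) ?e ?h3 //.
have [inc|dec] := itv_continuous_inj_mono h5 inj.
  move=> x y Kx Ky; rewrite -!hFf //.
  have xI : x \in `[0, 1] by rewrite in_itv /=; case/andP: (K01 hp hq hK Kx) => -> ->.
  have yI : y \in `[0, 1] by rewrite in_itv /=; case/andP: (K01 hp hq hK Ky) => -> ->.
  apply/idP/idP; first exact: inc.
  move=> h; rewrite ltNge; apply/negP; rewrite le_eqVlt => /orP[/eqP e|/(inc _ _ yI xI) h'].
    by move: h; rewrite e ltxx.
  by move: (lt_trans h h'); rewrite ltxx.
exfalso.
have I0 : (0 : R) \in `[0, 1] by rewrite in_itv /= lexx ler01.
have I1 : (1 : R) \in `[0, 1] by rewrite in_itv /= lexx ler01.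
have := dec 1 0 I1 I0 ltr01; rewrite (hFf K0) (hFf K1) f0 f1 => h.
by move: (lt_trans h ltr01); rewrite ltxx.
Qed.
Lemma ord_mono i m j n : (p ^+ m * q ^+ n < p ^+ i * q ^+ j) = (p' ^+ m * q' ^+ n < p' ^+ i * q' ^+ j).
Proof.
have [Ka fa] := fmono m n K1; have [Kb fb] := fmono i j K1.
rewrite !mulr1 in Ka Kb fa fb.
by rewrite (F_incr Ka Kb) fa fb f1 !mulr1.
Qed.

Lemma ord_cut1 i m j n : (p ^+ m * q ^+ n * (1 - p) < p ^+ i * q ^+ j) =
   (p' ^+ m * q' ^+ n * (1 - p') < p' ^+ i * q' ^+ j).
Proof.
have [Kp1 fp1] := Kp.
have [Ka fa] := fmono m n Kp1; have [Kb fb] := fmono i j K1.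
rewrite !mulr1 in Kb fb.
by rewrite (F_incr Ka Kb) fa fb f1 fp1 !mulr1.
Qed.

Lemma ord_cut2 i m j n : (p ^+ i * q ^+ j < p ^+ m * q ^+ n * (1 - p)) =
   (p' ^+ i * q' ^+ j < p' ^+ m * q' ^+ n * (1 - p')).
Proof.
have [Kp1 fp1] := Kp.
have [Ka fa] := fmono m n Kp1; have [Kb fb] := fmono i j K1.
rewrite !mulr1 in Kb fb.
by rewrite (F_incr Kb Ka) fa fb f1 fp1 !mulr1.
Qed.
Lemma A1 : Aset p q K 1.
Proof. left; exists 1; first exact: K1. by rewrite /Smap inordK //=; ring. Qed.

Lemma part2_eq : p' = p /\ q' = q.
Proof.
case/andP: hp => hp0 hp1; case/andP: hq => hq0 hq1.
case/andP: hp' => hp0' hp1'; case/andP: hq' => hq0' hq1'.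
have l1 x : 0 < x -> x < 2^-1 -> ln x < 0 by move=> *; apply: ln_lt0; apply/andP; split; lra.
have l2 x : 0 < x -> x < 2^-1 -> ln (1 - x) < 0 by move=> *; apply: ln_lt0; apply/andP; split; lra.
have q1 : 0 < 1 - p by lra.
have q1' : 0 < 1 - p' by lra.
have [] := @final_eq R (ln p) (ln q) (ln (1 - p)) (ln p') (ln q') (ln (1 - p')).
- exact: l1.
- exact: l1.
- exact: l2.
- exact: l1.
- exact: l1.
- by move=> i m j n; rewrite !ev_exp // ord_mono.
- move=> a b a0 b0 e.
  have : expR (a%:R * ln p) = expR (b%:R * ln q) by rewrite e.
  rewrite !expRM_natl !expln // => e2.
  by apply: (tf_ne htf a0 b0 A1 A1); rewrite !mulr1.
- by move=> i m j n; rewrite !ev_cut1 // ord_cut1.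
- by move=> i m j n; rewrite !ev_cut2 // ord_cut2.
- by rewrite !expln //; ring.
- by rewrite !expln //; ring.
move=> e1 e2; split.
  by rewrite -(expln hp0') -(expln hp0) e1.
by rewrite -(expln hq0') -(expln hq0) e2.
Qed.
End PartII.


Unset Implicit Arguments.

Theorem theorem11 (R : realType) (p q p' q' : R) (K K' : set R) :
  0 < p < 2^-1 -> 0 < q < 2^-1 -> 0 < p' < 2^-1 -> 0 < q' < 2^-1 ->
  is_attractor p q K -> is_attractor p' q' K' ->
  twofold p q K -> twofold p' q' K' ->
  (exists f : R -> R, homeo_on K K' f /\
     forall (i : 'I_4) x, K x -> f (Smap p q i x) = Smap p' q' i (f x)) /\
  ((p, q) <> (p', q') ->
   forall f : R -> R, homeo_on K K' f ->
     (forall (i : 'I_4) x, K x -> f (Smap p q i x) = Smap p' q' i (f x)) ->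
     ~ exists F : R -> R, homeo_on `[0, 1] `[0, 1] F /\ forall x, K x -> F x = f x).
Proof.
move=> hp hq hp' hq' hK hK' htf htf'; split; first exact: part1.
move=> Hne f hf hcomm [F [hF hFf]].
have [e1 e2] := part2_eq hp hq hp' hq' hK htf hcomm hF hFf.
by apply: Hne; rewrite e1 e2.
Qed.
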